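(* Let $\Psi(x)=I_1(x)/I_0(x)$ for $x>0$ and define $$\lambda(x)=\frac{\log\left(1-\frac{2}{x}\Psi(x)\right)}{\log\Psi(x)},\qquad x>0.$$ Then $2<\lambda(x)<4$ for all $x>0$, and $$\lim_{x\to0^+}\lambda(x)=2,\qquad \lim_{x\to\infty}\lambda(x)=4.$$ Consequently the constants $2$ and $4$ are the best possible, i.e. in the inequality $\sqrt{1-\frac1K}<r<\sqrt[4]{1-\frac1K}$, valid for $K>1$ and $r>0$ solving $r=\Psi(2Kr)$, the exponents $\frac12$ and $\frac14$ cannot be improved.
   Context: $I_\nu$ denotes the modified Bessel function of the first kind of order $\nu$. *)

(* Defs.v *)
From Stdlib Require Import Reals Factorial.
From Coquelicot Require Import Coquelicot.
Open Scope R_scope.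

Definition besselI (nu : nat) (x : R) : R :=
  Series (fun k => (x / 2) ^ (2 * k + nu) / (INR (fact k) * INR (fact (k + nu)))).

Definition Psi (x : R) : R := besselI 1 x / besselI 0 x.

Definition lambda (x : R) : R := ln (1 - (2 / x) * Psi x) / ln (Psi x).

(* Main.v *)
Require Import Defs.
From Stdlib Require Import Reals Lra Lia Factorial.
From Coquelicot Require Import Coquelicot.
Open Scope R_scope.

Definition a0 (n : nat) : R := / (INR (fact n) * INR (fact n)).
Definition a1 (n : nat) : R := / (INR (fact n) * INR (fact (S n))).

Lemma fact_pos n : 0 < INR (fact n).
Proof. apply INR_fact_lt_0. Qed.

Lemma INR_factS n : INR (fact (S n)) = INR (S n) * INR (fact n).
Proof. rewrite fact_simpl. rewrite mult_INR. reflexivity. Qed.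

Lemma lim_invS : is_lim_seq (fun n => / INR (S n)) 0.
Proof.
  apply (is_lim_seq_incr_1 (fun n => / INR n)).
  replace (Finite 0) with (Rbar_inv p_infty) by reflexivity.
  apply is_lim_seq_inv. apply is_lim_seq_INR. discriminate.
Qed.

Lemma rad_a0 : CV_radius a0 = p_infty.
Proof.
  apply CV_radius_infinite_DAlembert.
  - intro n. unfold a0. apply Rinv_neq_0_compat. pose proof (fact_pos n). nra.
  - apply is_lim_seq_ext with (fun n => / INR (S n) * / INR (S n)).
    + intro n. assert (0 < INR (S n)) by (apply lt_0_INR; lia).
      replace (a0 (S n) / a0 n) with (/ INR (S n) * / INR (S n)).
      rewrite Rabs_pos_eq; [reflexivity|]. apply Rlt_le, Rmult_lt_0_compat; apply Rinv_0_lt_compat; lra.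
      unfold a0. rewrite INR_factS. pose proof (fact_pos n). field. lra.
    + replace (Finite 0) with (Finite (0*0)) by (f_equal; ring).
      apply is_lim_seq_mult'; apply lim_invS.
Qed.

Lemma rad_a1 : CV_radius a1 = p_infty.
Proof.
  apply CV_radius_infinite_DAlembert.
  - intro n. unfold a1. apply Rinv_neq_0_compat. pose proof (fact_pos n). pose proof (fact_pos (S n)). nra.
  - apply is_lim_seq_ext with (fun n => / INR (S n) * / INR (S (S n))).
    + intro n. assert (0 < INR (S n)) by (apply lt_0_INR; lia).
      assert (0 < INR (S (S n))) by (apply lt_0_INR; lia).
      replace (a1 (S n) / a1 n) with (/ INR (S n) * / INR (S (S n))).
      rewrite Rabs_pos_eq; [reflexivity|]. apply Rlt_le, Rmult_lt_0_compat; apply Rinv_0_lt_compat; lra.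
      unfold a1. rewrite (INR_factS (S n)). rewrite INR_factS. pose proof (fact_pos n). field. lra.
    + replace (Finite 0) with (Finite (0*0)) by (f_equal; ring).
      apply is_lim_seq_mult'. apply lim_invS.
      apply (is_lim_seq_incr_1 (fun n => / INR (S n))). apply lim_invS.
Qed.

Lemma rad_da1 : CV_radius (PS_derive a1) = p_infty.
Proof. rewrite CV_radius_derive. apply rad_a1. Qed.

Lemma lt_inf x : Rbar_lt (Rabs x) p_infty.
Proof. simpl. auto. Qed.

Definition P0 t := PSeries a0 t.
Definition P1 t := PSeries a1 t.
Definition Q t := PSeries (PS_derive a1) t.

Lemma PS_derive_a0 n : PS_derive a0 n = a1 n.
Proof.
  unfold PS_derive, a0, a1. rewrite INR_factS. pose proof (fact_pos n).
  assert (0 < INR (S n)) by (apply lt_0_INR; lia). field. lra.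
Qed.

Lemma P0_deriv t : is_derive P0 t (P1 t).
Proof.
  unfold P0, P1. rewrite <- (PSeries_ext _ _ _ PS_derive_a0).
  apply is_derive_PSeries. rewrite rad_a0. apply lt_inf.
Qed.

Lemma P1_deriv t : is_derive P1 t (Q t).
Proof. unfold P1, Q. apply is_derive_PSeries. rewrite rad_a1. apply lt_inf. Qed.

Lemma Q_deriv t : ex_derive Q t.
Proof. unfold Q. eexists. apply is_derive_PSeries. rewrite rad_da1. apply lt_inf. Qed.

Lemma P0_P1 t : P0 t - P1 t = t * Q t.
Proof.
  unfold P0, P1, Q. rewrite <- PSeries_incr_1. rewrite <- PSeries_minus.
  - apply PSeries_ext. intro n. unfold PS_minus. destruct n as [|m].
    + simpl. unfold a0, a1. simpl. unfold minus, plus, opp, zero; simpl. field.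
    + change (a0 (S m) - a1 (S m) = PS_derive a1 m). unfold PS_derive, a0, a1.
      rewrite (INR_factS (S m)). pose proof (fact_pos (S m)).
      assert (0 < INR (S (S m))) by (apply lt_0_INR; lia).
      rewrite S_INR. rewrite S_INR in H0. field. split; lra.
  - apply CV_radius_inside. rewrite rad_a0. apply lt_inf.
  - apply CV_radius_inside. rewrite rad_a1. apply lt_inf.
Qed.

Lemma Series_nonneg (a : nat -> R) : (forall n, 0 <= a n) -> ex_series a -> 0 <= Series a.
Proof.
  intros H E. replace 0 with (Series (fun n => 0 * a n)).
  - apply Series_le; auto. intro n. rewrite Rmult_0_l. split; [lra|auto].
  - rewrite Series_scal_l. ring.
Qed.

Lemma PSeries_ge0 (a : nat -> R) t : (forall n, 0 <= a n) -> 0 <= t -> CV_radius a = p_infty ->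
  a O <= PSeries a t.
Proof.
  intros Ha Ht Hr. rewrite PSeries_decr_1.
  - cut (0 <= t * PSeries (PS_decr_1 a) t). lra.
    apply Rmult_le_pos; auto. apply Series_nonneg.
    + intro n. apply Rmult_le_pos; [apply Ha|apply pow_le; auto].
    + assert (ex_pseries (PS_decr_1 a) t). 2:{ revert H. apply ex_series_ext. intro n. unfold scal; simpl. unfold mult; simpl. rewrite pow_n_pow. ring. }
      apply CV_radius_inside. rewrite CV_radius_decr_1, Hr. apply lt_inf.
  - apply CV_radius_inside. rewrite Hr. apply lt_inf.
Qed.

Lemma P0_ge1 t : 0 <= t -> 1 <= P0 t.
Proof.
  intro Ht. replace 1 with (a0 O) by (unfold a0; simpl; field).
  apply PSeries_ge0; auto. intro n. unfold a0. apply Rlt_le, Rinv_0_lt_compat. pose proof (fact_pos n). nra.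
  apply rad_a0.
Qed.

Lemma P1_ge1 t : 0 <= t -> 1 <= P1 t.
Proof.
  intro Ht. replace 1 with (a1 O) by (unfold a1; simpl; field).
  apply PSeries_ge0; auto. intro n. unfold a1. apply Rlt_le, Rinv_0_lt_compat.
  pose proof (fact_pos n). pose proof (fact_pos (S n)). nra.
  apply rad_a1.
Qed.

Lemma Q_0 : Q 0 = / 2.
Proof. unfold Q. rewrite PSeries_0. unfold PS_derive, a1. simpl. field. Qed.

Lemma P0_0 : P0 0 = 1.
Proof. unfold P0. rewrite PSeries_0. unfold a0. simpl. field. Qed.

Definition p0 x := P0 (x^2/4).
Definition p1 x := P1 (x^2/4).
Definition q x := Q (x^2/4).

Lemma PSeries_unfold a t : PSeries a t = Series (fun k => a k * t ^ k).
Proof. unfold PSeries. reflexivity. Qed.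

Lemma bessel0_eq x : besselI 0 x = p0 x.
Proof.
  unfold besselI, p0, P0. rewrite PSeries_unfold. apply Series_ext. intro k.
  unfold a0. rewrite !Nat.add_0_r. rewrite pow_mult.
  replace ((x/2)^2) with (x^2/4) by field. unfold Rdiv. ring.
Qed.

Lemma bessel1_eq x : besselI 1 x = x / 2 * p1 x.
Proof.
  unfold besselI, p1, P1. rewrite PSeries_unfold. rewrite <- Series_scal_l. apply Series_ext. intro k.
  unfold a1. rewrite pow_add, pow_mult. rewrite Nat.add_1_r.
  replace ((x/2)^2) with (x^2/4) by field. unfold Rdiv. ring.
Qed.

Lemma p0_pos x : 1 <= p0 x.
Proof. apply P0_ge1. assert (0 <= x^2) by (simpl; nra). lra. Qed.
Lemma p1_pos x : 1 <= p1 x.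
Proof. apply P1_ge1. assert (0 <= x^2) by (simpl; nra). lra. Qed.

Lemma p0_p1 x : p0 x - p1 x = x^2/4 * q x.
Proof. apply P0_P1. Qed.

Lemma inner_deriv x : is_derive (fun x => x^2/4) x (x/2).
Proof. auto_derive; auto. field. Qed.

Lemma p0_deriv x : is_derive p0 x (x/2 * p1 x).
Proof. apply (is_derive_comp P0 (fun x => x^2/4)). apply P0_deriv. apply inner_deriv. Qed.

Lemma p1_deriv x : is_derive p1 x (x/2 * q x).
Proof. apply (is_derive_comp P1 (fun x => x^2/4)). apply P1_deriv. apply inner_deriv. Qed.

Lemma q_deriv x : ex_derive q x.
Proof. destruct (Q_deriv (x^2/4)) as [l Hl]. eexists.
  apply (is_derive_comp Q (fun x => x^2/4)). apply Hl. apply inner_deriv. Qed.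

Lemma Psi_eq x : Psi x = x / 2 * p1 x / p0 x.
Proof. unfold Psi. rewrite bessel0_eq, bessel1_eq. reflexivity. Qed.

Lemma Psi_deriv x : x <> 0 -> is_derive Psi x (1 - Psi x / x - Psi x ^ 2).
Proof.
  intro Hx. pose proof (p0_pos x). pose proof (p1_pos x).
  eapply is_derive_ext. intro t. symmetry. apply Psi_eq.
  replace (1 - Psi x / x - Psi x ^ 2) with
    (((/2 * p1 x + x/2 * (x/2 * q x)) * p0 x - (x/2 * p1 x) * (x/2 * p1 x)) / (p0 x)^2).
  - apply (is_derive_div (fun t => t/2 * p1 t) p0).
    + apply (is_derive_mult (fun t => t/2) p1). auto_derive; auto; ring. apply p1_deriv.
      intros; apply Rmult_comm.
    + apply p0_deriv.
    + lra.
  - rewrite Psi_eq. pose proof (p0_p1 x).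
    assert (q x = (p0 x - p1 x) * 4 / x^2). { rewrite H1. field. auto. }
    rewrite H2. field. split; auto. lra.
Qed.

Lemma deriv_cont f x l : derivable_pt_lim f x l ->
  forall eps, 0 < eps -> exists delta, 0 < delta /\ forall y, Rabs (y - x) < delta -> Rabs (f y - f x) < eps.
Proof.
  intros H eps Heps. destruct (H 1 Rlt_0_1) as [d Hd].
  assert (Hl : 0 < Rabs l + 1) by (pose proof (Rabs_pos l); lra).
  exists (Rmin d (eps / (Rabs l + 1))). split.
  { apply Rmin_pos. apply cond_pos. apply Rdiv_lt_0_compat; lra. }
  intros y Hy. destruct (Req_dec y x) as [E|E].
  { subst. replace (f x - f x) with 0 by ring. rewrite Rabs_R0. auto. }
  set (h := y - x). assert (hne : h <> 0) by (unfold h; lra).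
  assert (hd : Rabs h < d) by (unfold h; eapply Rlt_le_trans; [apply Hy| apply Rmin_l]).
  assert (he : Rabs h < eps / (Rabs l + 1)) by (unfold h; eapply Rlt_le_trans; [apply Hy| apply Rmin_r]).
  specialize (Hd h hne hd). replace (x + h) with y in Hd by (unfold h; ring).
  replace (f y - f x) with (((f y - f x) / h - l) * h + l * h) by (field; auto).
  eapply Rle_lt_trans. apply Rabs_triang. rewrite !Rabs_mult.
  assert (0 < Rabs h) by (apply Rabs_pos_lt; auto).
  apply Rlt_le_trans with (1 * Rabs h + Rabs l * Rabs h).
  { apply Rplus_lt_le_compat. apply Rmult_lt_compat_r; auto. lra. }
  replace (1 * Rabs h + Rabs l * Rabs h) with ((Rabs l + 1) * Rabs h) by ring.
  apply Rlt_le. apply (Rmult_lt_compat_l (Rabs l + 1)) in he; auto.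
  replace ((Rabs l + 1) * (eps / (Rabs l + 1))) with eps in he by (field; lra). auto.
Qed.

Lemma crossing (f f' : R -> R) (a : R) :
  (forall x, a <= x -> derivable_pt_lim f x (f' x)) -> 0 < f a ->
  (forall c, a < c -> f c = 0 -> 0 < f' c) -> forall x, a <= x -> 0 < f x.
Proof.
  intros Hd Ha Hz b Hb.
  destruct (Rlt_or_le 0 (f b)) as [Hfb|Hfb]; [auto|exfalso].
  assert (Hab : a < b). { destruct Hb; auto. subst; lra. }
  set (E := fun z => a <= z <= b /\ forall w, a <= w <= z -> 0 < f w).
  assert (HE : bound E). { exists b. intros z [Hz0 _]. lra. }
  assert (HEa : exists z, E z). { exists a. split. lra. intros w Hw. replace w with a by lra. auto. }
  destruct (completeness E HE HEa) as [m [Hub Hlub]].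
  assert (Ham : a <= m). { apply Hub. destruct HEa. unfold E. split. lra. intros w Hw. replace w with a by lra. auto. }
  assert (Hmb : m <= b). { apply Hlub. intros z [Hz0 _]. lra. }
  assert (F1 : forall w, a <= w < m -> 0 < f w).
  { intros w Hw. destruct (Rlt_or_le 0 (f w)) as [P|P]; auto. exfalso.
    assert (m <= w). { apply Hlub. intros z [Hz1 Hz2]. destruct (Rle_or_lt z w); auto.
      exfalso. specialize (Hz2 w ltac:(lra)). lra. } lra. }
  destruct (Rtotal_order (f m) 0) as [Hm|[Hm|Hm]].
  - assert (a < m). { destruct Ham; auto. subst. lra. }
    destruct (deriv_cont f m (f' m) (Hd m Ham) (- f m) ltac:(lra)) as [d [Hd0 Hdc]].
    set (w := Rmax a (m - d/2)).
    assert (a <= w < m). { unfold w. split. apply Rmax_l. apply Rmax_lub_lt; lra. }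
    specialize (F1 w H0). assert (Rabs (w - m) < d).
    { rewrite Rabs_left by lra. unfold w. assert (m - d/2 <= Rmax a (m - d/2)) by apply Rmax_r. lra. }
    specialize (Hdc w H1). apply Rabs_def2 in Hdc. lra.
  - assert (a < m). { destruct Ham; auto. subst. lra. }
    assert (Hp := Hz m H Hm). specialize (Hd m Ham (f' m / 2) ltac:(lra)).
    destruct Hd as [d Hd].
    set (h := - Rmin (d/2) ((m - a)/2)).
    assert (Hmin : 0 < Rmin (d/2) ((m-a)/2)). { apply Rmin_pos. pose proof (cond_pos d). lra. lra. }
    assert (hne : h <> 0) by (unfold h; lra).
    assert (hd : Rabs h < d).
    { unfold h. rewrite Rabs_Ropp, Rabs_pos_eq by lra. pose proof (Rmin_l (d/2) ((m-a)/2)). pose proof (cond_pos d). lra. }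
    specialize (Hd h hne hd). rewrite Hm in Hd. apply Rabs_def2 in Hd.
    assert (HQ : 0 < (f (m + h) - 0) / h) by lra.
    assert (f (m + h) < 0).
    { replace (f (m+h)) with ((f (m + h) - 0) / h * h) by (field; auto).
      assert (h < 0) by (unfold h; lra). nra. }
    assert (a <= m + h < m).
    { unfold h. pose proof (Rmin_r (d/2) ((m-a)/2)). lra. }
    specialize (F1 _ H1). lra.
  - assert (Hmb' : m < b). { destruct Hmb; auto. subst. lra. }
    destruct (deriv_cont f m (f' m) (Hd m Ham) (f m) Hm) as [d [Hd0 Hdc]].
    set (z := Rmin (m + d/2) b).
    assert (E z).
    { split. unfold z. split. apply Rmin_glb; lra. apply Rmin_r.
      intros w Hw. destruct (Rlt_or_le w m) as [Hwm|Hwm]. apply F1; lra.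
      assert (Rabs (w - m) < d).
      { rewrite Rabs_pos_eq by lra. pose proof (Rmin_l (m + d/2) b). unfold z in Hw. lra. }
      specialize (Hdc w H). apply Rabs_def2 in Hdc. lra. }
    specialize (Hub z H). unfold z in Hub.
    assert (m < Rmin (m + d/2) b) by (apply Rmin_glb_lt; lra). lra.
Qed.

Lemma Psi_derivable x : 0 < x -> derivable_pt_lim Psi x (1 - Psi x / x - Psi x ^ 2).
Proof. intro. apply is_derive_Reals. apply Psi_deriv. lra. Qed.

Lemma Psi_pos x : 0 < x -> 0 < Psi x.
Proof.
  intro Hx. rewrite Psi_eq. pose proof (p0_pos x). pose proof (p1_pos x).
  apply Rdiv_lt_0_compat; [|lra]. apply Rmult_lt_0_compat; lra.
Qed.

Definition phi x := 1 - 2 * Psi x / x - Psi x ^ 4.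
Definition chi x := Psi x ^ 2 + 2 * Psi x / x - 1.

Lemma phi_derive x : 0 < x ->
  is_derive phi x (2 * Psi x / x^2 - 2 * (1 - Psi x / x - Psi x ^ 2) / x - 4 * Psi x ^ 3 * (1 - Psi x / x - Psi x ^ 2)).
Proof.
  intro Hx. unfold phi. auto_derive.
  - assert (ex_derive Psi x) by (eexists; apply Psi_deriv; lra). repeat split; auto; lra.
  - change (fun x0 => Psi x0) with Psi. rewrite (is_derive_unique _ _ _ (Psi_deriv x ltac:(lra))). field. lra.
Qed.

Definition Gfun x := q x / p0 x - x^2/4 * (p1 x / p0 x)^4.
Definition Hfun x := (p1 x / p0 x)^2 - q x / p0 x.

Lemma q_eq x : x <> 0 -> q x = (p0 x - p1 x) * 4 / x^2.
Proof. intro. rewrite p0_p1. field. auto. Qed.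

Lemma phi_G x : 0 < x -> phi x = x^2/4 * Gfun x.
Proof.
  intro Hx. unfold phi, Gfun. rewrite Psi_eq. rewrite (q_eq x) by lra.
  pose proof (p0_pos x). field. lra.
Qed.

Lemma chi_H x : 0 < x -> chi x = x^2/4 * Hfun x.
Proof.
  intro Hx. unfold chi, Hfun. rewrite Psi_eq. rewrite (q_eq x) by lra.
  pose proof (p0_pos x). field. lra.
Qed.

Lemma p0_0 : p0 0 = 1.
Proof. unfold p0. replace (0^2/4) with 0 by field. apply P0_0. Qed.
Lemma q_0 : q 0 = /2.
Proof. unfold q. replace (0^2/4) with 0 by field. apply Q_0. Qed.

Lemma ex_p0 x : ex_derive p0 x. Proof. eexists. apply p0_deriv. Qed.
Lemma ex_p1 x : ex_derive p1 x. Proof. eexists. apply p1_deriv. Qed.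

Lemma near0 : exists d, 0 < d /\ forall x, 0 < x < d -> 0 < phi x /\ 0 < chi x.
Proof.
  assert (HG : ex_derive Gfun 0).
  { unfold Gfun. pose proof (ex_p0 0). pose proof (ex_p1 0). pose proof (q_deriv 0). pose proof p0_0.
    auto_derive. repeat split; auto; lra. }
  assert (HH : ex_derive Hfun 0).
  { unfold Hfun. pose proof (ex_p0 0). pose proof (ex_p1 0). pose proof (q_deriv 0). pose proof p0_0.
    auto_derive. repeat split; auto; lra. }
  assert (G0 : Gfun 0 = /2). { unfold Gfun. rewrite p0_0, q_0. field. }
  assert (H0 : Hfun 0 = /2). { unfold Hfun. rewrite p0_0, q_0. unfold p1. replace (0^2/4) with 0 by field.
    unfold P1. rewrite PSeries_0. unfold a1. simpl. field. }
  destruct HG as [lg Hg]. destruct HH as [lh Hh].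
  apply is_derive_Reals in Hg. apply is_derive_Reals in Hh.
  destruct (deriv_cont _ _ _ Hg (/4) ltac:(lra)) as [d1 [Hd1 C1]].
  destruct (deriv_cont _ _ _ Hh (/4) ltac:(lra)) as [d2 [Hd2 C2]].
  exists (Rmin d1 d2). split. apply Rmin_pos; auto.
  intros x Hx. assert (H1 : Rabs (x - 0) < d1). { rewrite Rminus_0_r, Rabs_pos_eq by lra. pose proof (Rmin_l d1 d2). lra. }
  assert (H2 : Rabs (x - 0) < d2). { rewrite Rminus_0_r, Rabs_pos_eq by lra. pose proof (Rmin_r d1 d2). lra. }
  specialize (C1 x H1). specialize (C2 x H2). apply Rabs_def2 in C1. apply Rabs_def2 in C2.
  rewrite phi_G, chi_H by lra. assert (H3 : 0 < x^2/4) by (simpl; nra).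
  split; apply Rmult_lt_0_compat; auto; lra.
Qed.

Lemma alg_phi u w : 0 < u -> 0 < w -> 1 - 2*u*w - u^4 = 0 ->
  0 < 2*u*w^2 - 2*(1-u*w-u^2)*w - 4*u^3*(1-u*w-u^2).
Proof.
  intros Hu Hw E. assert (Hw' : w = (1 - u^4)/(2*u)). { apply (Rmult_eq_reg_l (2*u)); [|lra]. replace (2*u*((1-u^4)/(2*u))) with (1-u^4) by (field; lra). lra. }
  assert (u < 1). { destruct (Rlt_or_le u 1); auto. assert (1 <= u^2) by nra. assert (1 <= u^4) by (replace (u^4) with (u^2*u^2) by ring; nra). nra. }
  replace (2*u*w^2 - 2*(1-u*w-u^2)*w - 4*u^3*(1-u*w-u^2)) with (u * (1-u^2)^3).
  - apply Rmult_lt_0_compat; auto. apply pow_lt. nra.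
  - rewrite Hw'. field. lra.
Qed.

Lemma alg_chi u w : 0 < u -> 0 < w -> u^2 + 2*u*w - 1 = 0 ->
  0 < 2*u*(1-u*w-u^2) + 2*(1-u*w-u^2)*w - 2*u*w^2.
Proof.
  intros Hu Hw E. assert (Hw' : w = (1 - u^2)/(2*u)). { apply (Rmult_eq_reg_l (2*u)); [|lra]. replace (2*u*((1-u^2)/(2*u))) with (1-u^2) by (field; lra). lra. }
  assert (u < 1). { destruct (Rlt_or_le u 1); auto. assert (0 < u*w) by nra. nra. }
  replace (2*u*(1-u*w-u^2) + 2*(1-u*w-u^2)*w - 2*u*w^2) with (u * (1-u^2)).
  - apply Rmult_lt_0_compat; auto. nra.
  - rewrite Hw'. field. lra.
Qed.

Lemma chi_derive x : 0 < x ->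
  is_derive chi x (2 * Psi x * (1 - Psi x / x - Psi x ^ 2) + 2 * (1 - Psi x / x - Psi x ^ 2) / x - 2 * Psi x / x^2).
Proof.
  intro Hx. unfold chi. auto_derive.
  - assert (ex_derive Psi x) by (eexists; apply Psi_deriv; lra). repeat split; auto; lra.
  - change (fun x0 => Psi x0) with Psi. rewrite (is_derive_unique _ _ _ (Psi_deriv x ltac:(lra))). field. lra.
Qed.

Lemma bounds x : 0 < x -> 0 < phi x /\ 0 < chi x.
Proof.
  intro Hx. destruct near0 as [d [Hd Hn]].
  destruct (Rlt_or_le x d) as [Hxd|Hxd]. { apply Hn; lra. }
  assert (Ha : 0 < d/2) by lra. destruct (Hn (d/2) ltac:(lra)) as [Pa Ca].
  split.
  - apply (crossing phi (fun x => 2 * Psi x / x^2 - 2 * (1 - Psi x / x - Psi x ^ 2) / x - 4 * Psi x ^ 3 * (1 - Psi x / x - Psi x ^ 2)) (d/2)); auto; try lra.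
    + intros y Hy. apply is_derive_Reals. apply phi_derive. lra.
    + intros c Hc Hz. cbv beta. unfold phi in Hz. pose proof (Psi_pos c ltac:(lra)) as H0.
      assert (H1 : 0 < /c) by (apply Rinv_0_lt_compat; lra).
      pose proof (alg_phi (Psi c) (/c) H0 H1) as H2. 
      replace (2 * Psi c / c ^ 2 - 2 * (1 - Psi c / c - Psi c ^ 2) / c - 4 * Psi c ^ 3 * (1 - Psi c / c - Psi c ^ 2))
        with (2 * Psi c * (/ c) ^ 2 - 2 * (1 - Psi c * / c - Psi c ^ 2) * / c - 4 * Psi c ^ 3 * (1 - Psi c * / c - Psi c ^ 2)) by (field; lra).
      apply H2. rewrite <- Hz. field. lra.
  - apply (crossing chi (fun x => 2 * Psi x * (1 - Psi x / x - Psi x ^ 2) + 2 * (1 - Psi x / x - Psi x ^ 2) / x - 2 * Psi x / x^2) (d/2)); auto; try lra.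
    + intros y Hy. apply is_derive_Reals. apply chi_derive. lra.
    + intros c Hc Hz. cbv beta. unfold chi in Hz. pose proof (Psi_pos c ltac:(lra)) as H0.
      assert (H1 : 0 < /c) by (apply Rinv_0_lt_compat; lra).
      pose proof (alg_chi (Psi c) (/c) H0 H1) as H2.
      replace (2 * Psi c * (1 - Psi c / c - Psi c ^ 2) + 2 * (1 - Psi c / c - Psi c ^ 2) / c - 2 * Psi c / c ^ 2)
        with (2 * Psi c * (1 - Psi c * / c - Psi c ^ 2) + 2 * (1 - Psi c * / c - Psi c ^ 2) * / c - 2 * Psi c * (/ c) ^ 2) by (field; lra).
      apply H2. rewrite <- Hz. field. lra.
Qed.

Lemma lt_div k p q : 0 < q -> k * q < p -> k < p / q.
Proof. intros Hq H. assert (0 < (p - k*q)/q) by (apply Rdiv_lt_0_compat; lra).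
  replace ((p - k*q)/q) with (p/q - k) in H0 by (field; lra). lra. Qed.
Lemma div_lt k p q : 0 < q -> p < k * q -> p / q < k.
Proof. intros Hq H. assert (0 < (k*q - p)/q) by (apply Rdiv_lt_0_compat; lra).
  replace ((k*q - p)/q) with (k - p/q) in H0 by (field; lra). lra. Qed.

Lemma key x : 0 < x -> 0 < Psi x /\ Psi x < 1 /\ Psi x ^ 4 < 1 - 2 / x * Psi x /\ 1 - 2 / x * Psi x < Psi x ^ 2.
Proof.
  intro Hx. destruct (bounds x Hx) as [B1 B2]. unfold phi, chi in *. pose proof (Psi_pos x Hx).
  assert (E : 2 / x * Psi x = 2 * Psi x / x) by (field; lra). rewrite E.
  assert (0 < 2 * Psi x / x) by (apply Rdiv_lt_0_compat; lra).
  assert (Psi x < 1). { destruct (Rlt_or_le (Psi x) 1); auto.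
    assert (1 <= Psi x^2) by nra. assert (1 <= Psi x^4) by (replace (Psi x^4) with (Psi x^2*Psi x^2) by ring; nra). lra. }
  repeat split; lra.
Qed.

Lemma lambda_bounds x : 0 < x -> 2 < lambda x < 4.
Proof.
  intro Hx. destruct (key x Hx) as [H1 [H2 [H3 H4]]]. unfold lambda.
  set (u := Psi x) in *. set (v := 1 - 2 / x * u) in *.
  assert (0 < u^4) by (apply pow_lt; lra).
  assert (Hlu : ln u < 0) by (rewrite <- ln_1; apply ln_increasing; lra).
  assert (L4 : ln (u^4) < ln v) by (apply ln_increasing; lra).
  assert (L2 : ln v < ln (u^2)) by (apply ln_increasing; [lra|lra]).
  rewrite ln_pow in L4, L2 by lra. simpl INR in L4, L2.
  replace (ln v / ln u) with ((- ln v) / (- ln u)) by (field; lra).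
  split. apply lt_div; lra. apply div_lt; lra.
Qed.

Lemma part4 K r : 1 < K -> 0 < r -> r = Psi (2 * K * r) ->
     sqrt (1 - 1 / K) < r < Rpower (1 - 1 / K) (1 / 4).
Proof.
  intros HK Hr E. assert (Hx : 0 < 2 * K * r) by nra.
  destruct (key _ Hx) as [H1 [H2 [H3 H4]]]. rewrite <- E in H3, H4.
  replace (1 - 2 / (2 * K * r) * r) with (1 - 1/K) in H3, H4 by (field; lra).
  assert (0 < r^4) by (apply pow_lt; lra).
  split.
  - rewrite <- (sqrt_pow2 r) by lra. apply sqrt_lt_1_alt. lra.
  - unfold Rpower. rewrite <- (exp_ln r) at 1 by lra. apply exp_increasing.
    assert (L : ln (r^4) < ln (1 - 1/K)) by (apply ln_increasing; lra).
    rewrite ln_pow in L by lra. simpl INR in L. lra.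
Qed.

Lemma realize x : 0 < x -> exists K r, 1 < K /\ 0 < r /\ r = Psi (2 * K * r) /\
   1 - 1 / K = 1 - 2 / x * Psi x /\ r = Psi x.
Proof.
  intro Hx. destruct (key x Hx) as [H1 [H2 [H3 H4]]].
  assert (0 < Psi x ^ 4) by (apply pow_lt; lra).
  assert (2 / x * Psi x < 1) by lra.
  exists (x / (2 * Psi x)), (Psi x). split; [|split; [|split; [|split]]].
  - apply lt_div. lra.
    assert (E : 2*Psi x = (2/x*Psi x)*x) by (field; lra). nra.
  - lra.
  - f_equal. field. lra.
  - field. split; lra.
  - reflexivity.
Qed.

Lemma ln_lambda x : 0 < x -> ln (1 - 2 / x * Psi x) = lambda x * ln (Psi x).
Proof.
  intro Hx. destruct (key x Hx) as [H1 [H2 _]]. unfold lambda.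
  assert (ln (Psi x) < 0) by (rewrite <- ln_1; apply ln_increasing; lra). field. lra.
Qed.

Lemma part5 x p : 0 < x -> p * lambda x <= 1 -> exists K r : R,
     1 < K /\ 0 < r /\ r = Psi (2 * K * r) /\ r <= Rpower (1 - 1 / K) p.
Proof.
  intros Hx Hp. destruct (realize x Hx) as [K [r [A1 [A2 [A3 [A4 A5]]]]]].
  exists K, r. repeat split; auto. unfold Rpower. rewrite A4, ln_lambda by auto.
  rewrite <- (exp_ln r) at 1 by lra. rewrite A5.
  destruct (key x Hx) as [H1 [H2 _]].
  assert (ln (Psi x) < 0) by (rewrite <- ln_1; apply ln_increasing; lra).
  destruct (Req_dec (p * (lambda x * ln (Psi x))) (ln (Psi x))) as [E|E].
  - rewrite E. lra.
  - left. apply exp_increasing. nra.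
Qed.

Lemma part6 x q : 0 < x -> 1 <= q * lambda x -> exists K r : R,
     1 < K /\ 0 < r /\ r = Psi (2 * K * r) /\ Rpower (1 - 1 / K) q <= r.
Proof.
  intros Hx Hp. destruct (realize x Hx) as [K [r [A1 [A2 [A3 [A4 A5]]]]]].
  exists K, r. repeat split; auto. unfold Rpower. rewrite A4, ln_lambda by auto.
  rewrite <- (exp_ln r) by lra. rewrite A5.
  destruct (key x Hx) as [H1 [H2 _]].
  assert (ln (Psi x) < 0) by (rewrite <- ln_1; apply ln_increasing; lra).
  destruct (Req_dec (q * (lambda x * ln (Psi x))) (ln (Psi x))) as [E|E].
  - rewrite E. lra.
  - left. apply exp_increasing. nra.
Qed.

Lemma ln_upper z : 0 < z -> ln z <= z - 1.
Proof. intro Hz. pose proof (exp_ineq1_le (ln z)) as E. rewrite exp_ln in E; lra. Qed.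
Lemma ln_lower z : 0 < z -> 1 - / z <= ln z.
Proof. intro Hz. pose proof (ln_upper (/z) ltac:(apply Rinv_0_lt_compat; lra)) as E.
  rewrite ln_Rinv in E by lra. lra. Qed.

Lemma Q_pos t : 0 <= t -> / 2 <= Q t.
Proof.
  intro Ht. replace (/2) with (PS_derive a1 O) by (unfold PS_derive, a1; simpl; field).
  apply PSeries_ge0; auto. 2: apply rad_da1.
  intro n. unfold PS_derive, a1. apply Rmult_le_pos. apply pos_INR.
  apply Rlt_le, Rinv_0_lt_compat. pose proof (fact_pos (S n)). pose proof (fact_pos (S (S n))). nra.
Qed.

Lemma q_pos x : / 2 <= q x.
Proof. apply Q_pos. assert (0 <= x^2) by (simpl; nra). lra. Qed.

Lemma lim0_eps eps : 0 < eps -> exists d, 0 < d /\ forall x, 0 < x < d -> Rabs (lambda x - 2) < eps.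
Proof.
  intro He.
  destruct (ex_p0 0) as [l Hl]. apply is_derive_Reals in Hl.
  destruct (deriv_cont _ _ _ Hl 1 Rlt_0_1) as [d0 [Hd0 C0]].
  exists (Rmin (Rmin d0 1) (2 * exp (- (4/eps)))). split.
  { apply Rmin_pos. apply Rmin_pos; lra. pose proof (exp_pos (-(4/eps))). lra. }
  intros x [Hx Hxd].
  assert (Hx1 : x < 1). { pose proof (Rmin_l (Rmin d0 1) (2 * exp (- (4/eps)))). pose proof (Rmin_r d0 1). lra. }
  assert (Hxe : x < 2 * exp (- (4/eps))) by (pose proof (Rmin_r (Rmin d0 1) (2 * exp (- (4/eps)))); lra).
  assert (Hp0 : p0 x <= 2).
  { assert (Hxd0 : Rabs (x - 0) < d0). { rewrite Rminus_0_r, Rabs_pos_eq by lra.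
      pose proof (Rmin_l (Rmin d0 1) (2 * exp (- (4/eps)))). pose proof (Rmin_l d0 1). lra. }
    specialize (C0 x Hxd0). apply Rabs_def2 in C0. rewrite p0_0 in C0. lra. }
  pose proof (p0_pos x). pose proof (p1_pos x). pose proof (q_pos x).
  set (r := p1 x / p0 x). set (s := q x / p0 x).
  assert (Hu : Psi x = x / 2 * r) by (rewrite Psi_eq; unfold r; field; lra).
  assert (Hv : 1 - 2 / x * Psi x = x^2/4 * s).
  { rewrite Hu. unfold r, s. rewrite (q_eq x) by lra. field. lra. }
  destruct (key x Hx) as [K1 [K2 [K3 K4]]].
  assert (Hr1 : r <= 1). { unfold r. apply (Rmult_le_reg_r (p0 x)); [lra|].
    replace (p1 x / p0 x * p0 x) with (p1 x) by (field; lra). pose proof (p0_p1 x).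
    assert (0 <= x^2/4 * q x). { apply Rmult_le_pos; [simpl; nra|lra]. } lra. }
  assert (Hr0 : 0 < r) by (unfold r; apply Rdiv_lt_0_compat; lra).
  assert (Hs0 : / 4 <= s). { unfold s. apply (Rmult_le_reg_r (p0 x)); [lra|].
    replace (q x / p0 x * p0 x) with (q x) by (field; lra). lra. }
  assert (Hvr : x^2/4 * s = 1 - r). { rewrite <- Hv, Hu. field. lra. }
  assert (x^2/4 > 0) by (simpl; nra).
  assert (Hs1 : s < 1).
  { rewrite Hv, Hu in K4. replace ((x/2*r)^2) with (x^2/4 * r^2) in K4 by (simpl; field).
    assert (s < r^2) by (apply (Rmult_lt_reg_l (x^2/4)); lra). nra. }
  assert (Hr34 : 3/4 <= r). { assert (x^2/4 < /4) by (simpl; nra). nra. }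
  unfold lambda. rewrite Hv, Hu.
  replace (x^2/4) with ((x/2)^2) by field.
  assert (0 < x/2) by lra.
  rewrite ln_mult, ln_mult, ln_pow by (try apply pow_lt; lra). simpl INR.
  set (L := ln (x/2)).
  assert (HL : L < - (4/eps)).
  { unfold L. rewrite <- (ln_exp (- (4/eps))). apply ln_increasing. lra. lra. }
  pose proof (ln_lower s ltac:(lra)). pose proof (ln_upper s ltac:(lra)).
  pose proof (ln_lower r ltac:(lra)). pose proof (ln_upper r ltac:(lra)).
  assert (/ s <= 4). { replace 4 with (/ / 4) by field. apply Rinv_le_contravar; lra. }
  assert (/ r <= 4/3). { replace (4/3) with (/ (3/4)) by field. apply Rinv_le_contravar; lra. }
  assert (0 < 4 / eps) by (apply Rdiv_lt_0_compat; lra).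
  assert (eps * (4/eps) = 4) by (field; lra).
  replace ((1 + 1) * L + ln s) with (2 * (L + ln r) + (ln s - 2 * ln r)) by ring.
  replace ((2 * (L + ln r) + (ln s - 2 * ln r)) / (L + ln r) - 2) with ((ln s - 2 * ln r) / (L + ln r)) by (field; lra).
  rewrite Rabs_div by lra. rewrite (Rabs_left (L + ln r)) by lra.
  apply div_lt. lra. apply Rabs_def1; nra.
Qed.

Definition yf x := x * (1 - Psi x).

Lemma y_bounds x : 0 < x -> Psi x / 2 < yf x /\ yf x < 1.
Proof.
  intro Hx. destruct (key x Hx) as [K1 [K2 [K3 K4]]]. unfold yf.
  assert (E : 2 / x * Psi x * x = 2 * Psi x) by (field; lra).
  split.
  - assert (F : 1 - Psi x ^ 4 = (1 - Psi x) * (1 + Psi x + Psi x^2 + Psi x^3)) by ring.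
    assert (Psi x ^ 2 < 1) by (simpl; nra). assert (Psi x ^ 3 < 1) by (simpl; nra).
    assert ((1 - Psi x) * (1 + Psi x + Psi x^2 + Psi x^3) < (1 - Psi x) * 4) by (apply Rmult_lt_compat_l; lra).
    assert (2 / x * Psi x < 4 * (1 - Psi x)) by lra.
    assert (2 / x * Psi x * x < 4 * (1 - Psi x) * x) by (apply Rmult_lt_compat_r; lra). nra.
  - assert (Hc : 2 / x * Psi x * x > (1 - Psi x ^ 2) * x) by (apply Rmult_lt_compat_r; lra).
    rewrite E in Hc. simpl in Hc. nra.
Qed.

Lemma y_derive x : 0 < x -> derivable_pt_lim yf x (1 - yf x * (1 + Psi x)).
Proof.
  intro Hx. apply is_derive_Reals. unfold yf. auto_derive.
  - eexists; apply Psi_deriv; lra.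
  - change (fun x0 => Psi x0) with Psi. rewrite (is_derive_unique _ _ _ (Psi_deriv x ltac:(lra))). field. lra.
Qed.

Lemma y_upper eps : 0 < eps -> exists M, 0 < M /\ forall x, M <= x -> yf x < /2 + eps.
Proof.
  intro He. set (X := (/2 + eps) / eps + 1).
  assert (HX : (/2 + eps)/eps < X) by (unfold X; lra).
  assert (HX0 : 0 < (/2 + eps)/eps) by (apply Rdiv_lt_0_compat; lra).
  assert (Hdec : forall z, X <= z -> /2 + eps <= yf z -> 1 - yf z * (1 + Psi z) <= - eps).
  { intros z Hz Hy. assert (0 < z) by lra. destruct (y_bounds z H) as [_ Y1].
    unfold yf in Y1. assert (1 - Psi z < / z).
    { apply (Rmult_lt_reg_l z); [lra|]. replace (z * / z) with 1 by (field; lra). lra. }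
    assert ((/2 + eps) / z < eps).
    { apply div_lt. lra. apply (Rmult_lt_reg_l (/eps)). apply Rinv_0_lt_compat; lra.
      replace (/ eps * (eps * z)) with z by (field; lra). unfold Rdiv in HX. lra. }
    assert ((/2+eps)/z = (/2+eps) * /z) by (unfold Rdiv; ring).
    assert (0 < /z) by (apply Rinv_0_lt_compat; lra).
    destruct (key z H) as [K1 [K2 _]].
    assert (yf z * (1 + Psi z) >= (/2 + eps) * (2 - / z)) by nra. nra. }
  assert (HA : exists x1, X <= x1 /\ yf x1 < /2 + eps).
  { destruct (Classical_Prop.classic (exists x1, X <= x1 <= X + /eps /\ yf x1 < /2 + eps)) as [[x1 [Hx1 Hy1]]|Hn].
    - exists x1. split; [lra|auto].
    - exfalso. assert (Hall : forall z, X <= z <= X + /eps -> /2 + eps <= yf z).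
      { intros z Hz. destruct (Rlt_or_le (yf z) (/2 + eps)); auto. exfalso. apply Hn. exists z. auto. }
      assert (0 < /eps) by (apply Rinv_0_lt_compat; lra).
      destruct (MVT_cor2 yf (fun z => 1 - yf z * (1 + Psi z)) X (X + /eps)) as [c [Hc1 Hc2]].
      { lra. }
      { intros c Hc. apply y_derive. lra. }
      assert (1 - yf c * (1 + Psi c) <= - eps) by (apply Hdec; [lra| apply Hall; lra]).
      replace (X + / eps - X) with (/eps) in Hc1 by ring.
      assert (eps * / eps = 1) by (field; lra).
      destruct (y_bounds X ltac:(lra)) as [_ Y1]. destruct (y_bounds (X + /eps) ltac:(lra)) as [Y2 _].
      pose proof (Psi_pos (X + /eps) ltac:(lra)). nra. }
  destruct HA as [x1 [Hx1 Hy1]]. exists x1. split. lra.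
  intros x Hx.
  assert (0 < /2 + eps - yf x). 2: lra.
  apply (crossing (fun z => /2 + eps - yf z) (fun z => - (1 - yf z * (1 + Psi z))) x1); auto; try lra.
  - intros z Hz. cbv beta.
    replace (- (1 - yf z * (1 + Psi z))) with (0 - (1 - yf z * (1 + Psi z))) by ring.
    change (fun z => /2 + eps - yf z) with (minus_fct (fct_cte (/2 + eps)) yf).
    apply derivable_pt_lim_minus. apply derivable_pt_lim_const. apply y_derive. lra.
  - intros c Hc Hz. assert (/2 + eps <= yf c) by lra. pose proof (Hdec c ltac:(lra) H). lra.
Qed.

Lemma liminf_eps eps : 0 < eps -> exists M, forall x, M < x -> Rabs (lambda x - 4) < eps.
Proof.
  intro He. destruct (y_upper (eps/16) ltac:(lra)) as [M1 [HM1 Hy]].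
  exists (Rmax M1 (16/eps + 1)). intros x Hx.
  assert (Hx1 : M1 <= x) by (pose proof (Rmax_l M1 (16/eps+1)); lra).
  assert (Hx2 : 16/eps + 1 < x) by (pose proof (Rmax_r M1 (16/eps+1)); lra).
  assert (H16 : 0 < 16/eps) by (apply Rdiv_lt_0_compat; lra).
  assert (Hx0 : 0 < x) by lra.
  specialize (Hy x Hx1). destruct (y_bounds x Hx0) as [Y0 Y1].
  destruct (key x Hx0) as [K1 [K2 [K3 K4]]]. destruct (lambda_bounds x Hx0) as [L2 L4].
  set (w := Psi x) in *. set (u := 2 / x * w) in *.
  assert (Hu : 0 < u) by (unfold u; apply Rmult_lt_0_compat; [apply Rdiv_lt_0_compat|]; lra).
  assert (Hu1 : u < 1) by (assert (0 < w^4) by (apply pow_lt; lra); lra).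
  assert (Hlw : ln w < 0) by (rewrite <- ln_1; apply ln_increasing; lra).
  assert (HA : lambda x * (- ln w) = - ln (1 - u)) by (unfold lambda; fold w u; field; lra).
  pose proof (ln_upper (1 - u) ltac:(lra)) as U1.
  pose proof (ln_lower w K1) as U2.
  assert (U3 : - ln w <= (1 - w) / w).
  { assert (1 - / w = - ((1 - w)/w)) by (field; lra). lra. }
  assert (U4 : u <= lambda x * ((1 - w)/w)).
  { assert (lambda x * (- ln w) <= lambda x * ((1 - w) / w)) by (apply Rmult_le_compat_l; lra). lra. }
  assert (U5 : 2 * w^2 <= lambda x * yf x).
  { unfold yf. fold w. unfold u in U4.
    assert (E1 : 2 / x * w * (x * w) = 2 * w^2) by (field; lra).
    assert (E2 : lambda x * ((1 - w) / w) * (x * w) = lambda x * (x * (1 - w))) by (field; lra).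
    assert (0 < x * w) by nra.
    assert (2 / x * w * (x * w) <= lambda x * ((1 - w) / w) * (x * w)) by (apply Rmult_le_compat_r; lra).
    lra. }
  assert (Hw1 : 1 - / x < w).
  { unfold yf in Y1. fold w in Y1. apply (Rmult_lt_reg_l x); [lra|].
    replace (x * (1 - /x)) with (x - 1) by (field; lra). lra. }
  assert (Hix : / x < eps / 16).
  { replace (eps/16) with (/ (16/eps)) by (field; lra). apply Rinv_lt_contravar; nra. }
  assert (0 < / x) by (apply Rinv_0_lt_compat; lra).
  assert (Hw2 : 1 - eps / 8 < w^2).
  { assert (/ x < 1) by (rewrite <- Rinv_1; apply Rinv_lt_contravar; lra). assert (0 < 1 - /x) by lra.
    assert ((1 - /x)^2 < w^2) by (simpl; nra). simpl in *. nra. }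
  assert (lambda x * yf x < lambda x * (/2 + eps/16)) by (apply Rmult_lt_compat_l; lra).
  apply Rabs_def1. lra.
  nra.
Qed.

Theorem mainTheorem2 :
  (forall x : R, 0 < x -> 2 < lambda x < 4) /\
  filterlim lambda (at_right 0) (locally 2) /\
  filterlim lambda (Rbar_locally p_infty) (locally 4) /\
  (* the resulting inequality for K > 1, r > 0 with r = Psi(2Kr) *)
  (forall K r : R, 1 < K -> 0 < r -> r = Psi (2 * K * r) ->
     sqrt (1 - 1 / K) < r < Rpower (1 - 1 / K) (1 / 4)) /\
  (* the exponent 1/2 cannot be decreased *)
  (forall p : R, p < 1 / 2 -> exists K r : R,
     1 < K /\ 0 < r /\ r = Psi (2 * K * r) /\ r <= Rpower (1 - 1 / K) p) /\
  (* the exponent 1/4 cannot be increased *)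
  (forall q : R, 1 / 4 < q -> exists K r : R,
     1 < K /\ 0 < r /\ r = Psi (2 * K * r) /\ Rpower (1 - 1 / K) q <= r).
Proof.
  split; [exact lambda_bounds|]. split; [|split; [|split; [exact part4|split]]].
  - apply filterlim_locally. intros [eps He]. simpl.
    destruct (lim0_eps eps He) as [d [Hd Hl]].
    exists (mkposreal d Hd). intros y Hy Hpos. unfold ball in Hy |- *. simpl in *.
    unfold AbsRing_ball, abs, minus, plus, opp in *; simpl in *.
    apply Hl. split; auto. rewrite Ropp_0, Rplus_0_r in Hy. rewrite Rabs_pos_eq in Hy; lra.
  - apply filterlim_locally. intros [eps He]. simpl.
    destruct (liminf_eps eps He) as [M HM]. exists M. intros x Hx.
    unfold ball. simpl. unfold AbsRing_ball, abs, minus, plus, opp; simpl. apply HM; auto.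
  - intros p Hp. destruct (Rle_or_lt p 0) as [Hp0|Hp0].
    + apply (part5 1). lra. destruct (lambda_bounds 1 ltac:(lra)). nra.
    + destruct (lim0_eps (/p - 2)) as [d [Hd Hl]].
      { assert (2 < /p). { replace 2 with (/ (1/2)) by field. apply Rinv_lt_contravar; nra. } lra. }
      apply (part5 (d/2)). lra.
      specialize (Hl (d/2) ltac:(lra)). apply Rabs_def2 in Hl.
      assert (p * lambda (d/2) < p * / p) by (apply Rmult_lt_compat_l; lra).
      replace (p * / p) with 1 in H by (field; lra). lra.
  - intros q Hq. assert (0 < q) by lra.
    destruct (liminf_eps (4 - /q)) as [M HM].
    { assert (/q < 4). { replace 4 with (/ (1/4)) by field. apply Rinv_lt_contravar; nra. } lra. }
    apply (part6 (Rmax M 0 + 1)). pose proof (Rmax_r M 0). lra.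
    specialize (HM (Rmax M 0 + 1) ltac:(pose proof (Rmax_l M 0); lra)). apply Rabs_def2 in HM.
    assert (q * / q < q * lambda (Rmax M 0 + 1)) by (apply Rmult_lt_compat_l; lra).
    replace (q * / q) with 1 in H0 by (field; lra). lra.
Qed.
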